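(* There exists a graded $\mathbb{R}$-algebra isomorphism $$H^*(BSO(8);\mathbb{R})\cong \mathbb{R}[a,b,c,d]$$ which intertwines the triality automorphism on $H^*(BSO(8);\mathbb{R})$ with the triality action on $\mathbb{R}[a,b,c,d]$, where the grading on $H^*(BSO(8);\mathbb{R})$ is the cohomological degree divided by $4$ and the grading on $\mathbb{R}[a,b,c,d]$ is $\deg a=1$, $\deg b=\deg c=2$, $\deg d=3$.
   Context: $a,b,c,d$ are the parameters of the miniversal deformation $F(x,y,a,b,c,d)=x^3-3xy^2+a(x^2+y^2)+bx+cy+d$ of the singularity $x^3-3xy^2$ (type $D_4^-$); with the stated degrees $F$ is quasihomogeneous. The triality acts on $\mathbb{R}[a,b,c,d]$ by the algebra automorphism fixing $a$ and $d$ and acting on the span of $b,c$ by the rotation by $120^\circ$ (induced from $(a,b,c,d)\mapsto(a,\phi_0(b,c),d)$, $\phi_0$ the rotation by $120^\circ$). On $H^*(BSO(8);\mathbb{R})=\mathbb{R}[p_1,p_2,p_3,e]=\mathbb{R}[L_1,\dots,L_4]^W$ ($W$ the Weyl group of $D_4$, $\deg L_i=2$, $p_i=\sigma_i(L_1^2,\dots,L_4^2)$, $e=L_1L_2L_3L_4$) the triality automorphism is the algebra automorphism with $\phi(L_1)=\tfrac12(L_1+L_2+L_3+L_4)$, $\phi(L_2)=\tfrac12(L_1+L_2-L_3-L_4)$, $\phi(L_3)=\tfrac12(L_1-L_2+L_3-L_4)$, $\phi(L_4)=\tfrac12(-L_1+L_2+L_3-L_4)$. *)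

(* Defs.v *)
From HB Require Import structures.
From mathcomp Require Import all_boot all_order all_algebra.
Set Implicit Arguments. Unset Strict Implicit. Unset Printing Implicit Defensive.
Import Order.TTheory GRing.Theory Num.Theory.
Local Open Scope ring_scope.

(* Polynomial ring in four variables X1, X2, X3, X4 over R, realised as
   iterated univariate polynomials: X1 is the outermost variable.
   The coefficient of X1^i X2^j X3^k X4^l in p is  p`_i`_j`_k`_l. *)
Notation mpoly4 R := {poly {poly {poly {poly R}}}}.

Section MPoly4.
Variable R : nzRingType.

Definition C4 (c : R) : mpoly4 R := c%:P%:P%:P%:P.
Definition X1 : mpoly4 R := 'X.
Definition X2 : mpoly4 R := 'X%:P.
Definition X3 : mpoly4 R := 'X%:P%:P.
Definition X4 : mpoly4 R := 'X%:P%:P%:P.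

Definition coef4 (p : mpoly4 R) (i j k l : nat) : R := p`_i`_j`_k`_l.

Definition whomog (w1 w2 w3 w4 n : nat) (p : mpoly4 R) : Prop :=
  forall i j k l, coef4 p i j k l != 0 -> (w1 * i + w2 * j + w3 * k + w4 * l)%N = n.

Definition graded (w1 w2 w3 w4 v1 v2 v3 v4 : nat) (F : mpoly4 R -> mpoly4 R) :=
  forall n p, whomog w1 w2 w3 w4 n p -> whomog v1 v2 v3 v4 n (F p).

Definition alg_hom (F : mpoly4 R -> mpoly4 R) : Prop :=
  [/\ forall x y, F (x + y) = F x + F y,
      forall x y, F (x * y) = F x * F y &
      forall c, F (C4 c) = C4 c].
End MPoly4.
Arguments X1 {R}. Arguments X2 {R}. Arguments X3 {R}. Arguments X4 {R}.

Definition eval1 (A S : nzRingType) (f : A -> S) (y : S) (p : {poly A}) : S :=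
  \sum_(i < size p) f p`_i * y ^+ i.

Definition eval4 (R S : nzRingType) (f : R -> S) (y1 y2 y3 y4 : S)
  (p : mpoly4 R) : S :=
  eval1 (eval1 (eval1 (eval1 f y4) y3) y2) y1 p.

Section Triality.
Variable R : rcfType.
Local Notation P := (mpoly4 R).
Local Notation C := (@C4 R).
Local Notation x1 := (@X1 R). Local Notation x2 := (@X2 R).
Local Notation x3 := (@X3 R). Local Notation x4 := (@X4 R).

Definition subst4 (y1 y2 y3 y4 : P) (p : P) : P := eval4 C y1 y2 y3 y4 p.

(* ---- R[a,b,c,d]: a = x1, b = x2, c = x3, d = x4;
        weights deg a = 1, deg b = deg c = 2, deg d = 3. ---- *)
(* triality on R[a,b,c,d]: (Tf)(a,b,c,d) = f(a, phi0(b,c), d),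
   phi0 = rotation by 120 degrees: (b,c) |-> (cos b - sin c, sin b + cos c). *)
Definition triality_abcd (f : P) : P :=
  subst4 x1
    (C (- 2^-1) * x2 - C (Num.sqrt 3 / 2) * x3)
    (C (Num.sqrt 3 / 2) * x2 - C (2^-1) * x3)
    x4 f.

(* ---- H^*(BSO(8);R) = R[p1,p2,p3,e]: p1 = x1, p2 = x2, p3 = x3, e = x4;
        grading = cohomological degree / 4: p1,p2,p3,e of degree 1,2,3,2. ---- *)
(* ---- R[L1,..,L4]: Li = Xi. ---- *)
Definition Lsq1 : P := x1 ^+ 2.
Definition Lsq2 : P := x2 ^+ 2.
Definition Lsq3 : P := x3 ^+ 2.
Definition Lsq4 : P := x4 ^+ 2.

(* the inclusion R[p1,p2,p3,e] -> R[L1,..,L4] (onto the W-invariants):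
   p_i |-> sigma_i(L1^2,..,L4^2), e |-> L1 L2 L3 L4 *)
Definition iotaBSO8 (f : P) : P :=
  subst4
    (Lsq1 + Lsq2 + Lsq3 + Lsq4)
    (Lsq1 * Lsq2 + Lsq1 * Lsq3 + Lsq1 * Lsq4 + Lsq2 * Lsq3 + Lsq2 * Lsq4
       + Lsq3 * Lsq4)
    (Lsq1 * Lsq2 * Lsq3 + Lsq1 * Lsq2 * Lsq4 + Lsq1 * Lsq3 * Lsq4
       + Lsq2 * Lsq3 * Lsq4)
    (x1 * x2 * x3 * x4) f.

Definition triality_L (f : P) : P :=
  subst4
    (C (2^-1) * (x1 + x2 + x3 + x4))
    (C (2^-1) * (x1 + x2 - x3 - x4))
    (C (2^-1) * (x1 - x2 + x3 - x4))
    (C (2^-1) * (- x1 + x2 + x3 - x4)) f.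
End Triality.

(* Main.v *)
Require Import Defs.
From HB Require Import structures.
From mathcomp Require Import all_boot all_order all_algebra.
From mathcomp.algebra_tactics Require Import ring.
Import Order.TTheory GRing.Theory Num.Theory.
Set Implicit Arguments. Unset Strict Implicit. Unset Printing Implicit Defensive.
Local Open Scope ring_scope.

Section G.
Variables (A S : comNzRingType).
Definition ev (f : {rmorphism A -> S}) (y : S) :
  {rmorphism {poly A} -> S} := horner_morph (fun a => mulrC y (f a)).
Lemma evX f y : ev f y 'X = y. Proof. exact: horner_morphX. Qed.
Lemma evC f y c : ev f y c%:P = f c. Proof. exact: horner_morphC. Qed.
Lemma ev_uniq (g : {rmorphism {poly A} -> S}) p :
  g p = ev (g \o polyC) (g 'X) p.
Proof.
elim/poly_ind: p => [|p c IH]; first by rewrite !rmorph0.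
by rewrite !rmorphD !rmorphM IH evX evC.
Qed.
Lemma ev_ext (f g : {rmorphism A -> S}) y p :
  f =1 g -> ev f y p = ev g y p.
Proof. by move=> fg; rewrite /ev /= /horner_morph (eq_map_poly fg). Qed.
Lemma evE (f : {rmorphism A -> S}) y p : eval1 f y p = ev f y p.
Proof.
rewrite /ev /= /horner_morph (@horner_coef_wide _ (size p)).
  by apply: eq_bigr => i _; rewrite coef_map.
by rewrite /map_poly size_poly.
Qed.
End G.

Lemma eval1_ext (A S : nzRingType) (f g : A -> S) y p :
  f =1 g -> eval1 f y p = eval1 g y p.
Proof. by move=> fg; apply: eq_bigr => i _; rewrite fg. Qed.

Section U.
Variables (K S : comNzRingType).
Local Notation P := (mpoly4 K).
Definition S4 (C : {rmorphism K -> S}) (y1 y2 y3 y4 : S) : {rmorphism P -> S} :=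
  ev (ev (ev (ev C y4) y3) y2) y1.
Lemma S4_uniq (g : {rmorphism P -> S}) p :
  g p = S4 (g \o polyC \o polyC \o polyC \o polyC) (g X1) (g X2) (g X3) (g X4) p.
Proof.
rewrite ev_uniq /S4; apply: ev_ext => q.
apply: etrans (ev_uniq _ q) _; apply: ev_ext => r.
apply: etrans (ev_uniq _ r) _; apply: ev_ext => s.
apply: etrans (ev_uniq _ s) _; apply: ev_ext => c.
done.
Qed.
Lemma S4E (C : {rmorphism K -> S}) y1 y2 y3 y4 p :
  eval4 C y1 y2 y3 y4 p = S4 C y1 y2 y3 y4 p.
Proof.
rewrite /eval4 /S4 -evE; apply: eval1_ext => q.
rewrite -evE; apply: eval1_ext => r.
rewrite -evE; apply: eval1_ext => s.
by rewrite -evE.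
Qed.
Variables (C : {rmorphism K -> S}) (y1 y2 y3 y4 : S).
Lemma S4C c : S4 C y1 y2 y3 y4 (C4 c) = C c.
Proof. by rewrite /S4 /C4 !evC. Qed.
Lemma S4X1 : S4 C y1 y2 y3 y4 X1 = y1. Proof. by rewrite /S4 /X1 evX. Qed.
Lemma S4X2 : S4 C y1 y2 y3 y4 X2 = y2. Proof. by rewrite /S4 /X2 evC evX. Qed.
Lemma S4X3 : S4 C y1 y2 y3 y4 X3 = y3. Proof. by rewrite /S4 /X3 !evC evX. Qed.
Lemma S4X4 : S4 C y1 y2 y3 y4 X4 = y4. Proof. by rewrite /S4 /X4 !evC evX. Qed.
End U.

Section Sc.
Variable A : comNzRingType.
Definition sc1 (c : A) : {rmorphism {poly A} -> {poly A}} :=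
  @horner_morph _ _ polyC (c%:P * 'X) (fun a => mulrC _ _).
Lemma sc1C c a : sc1 c a%:P = a%:P. Proof. exact: horner_morphC. Qed.
Lemma sc1X c : sc1 c 'X = c%:P * 'X. Proof. exact: horner_morphX. Qed.
Lemma sc1_coef c p i : (sc1 c p)`_i = c ^+ i * p`_i.
Proof.
elim/poly_ind: p i => [|p d IH] i; first by rewrite rmorph0 !coef0 mulr0.
rewrite rmorphD rmorphM sc1C sc1X mulrA !coefD !coefMX !coefC coefMC.
case: i => [|i] /=; first by rewrite expr0 mul1r.
by rewrite IH exprS !addr0 [LHS]mulrC mulrA.
Qed.
End Sc.

Section Scale.
Variable K : comNzRingType.
Local Notation P := (mpoly4 K).
Variables a1 a2 a3 a4 : K.
Definition scl1 : {rmorphism {poly K} -> {poly K}} := sc1 a4.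
Definition scl2 : {rmorphism {poly {poly K}} -> {poly {poly K}}} :=
  sc1 a3%:P \o map_poly scl1.
Definition scl3 : {rmorphism {poly {poly {poly K}}} -> {poly {poly {poly K}}}} :=
  sc1 a2%:P%:P \o map_poly scl2.
Definition scale4 : {rmorphism P -> P} :=
  sc1 a1%:P%:P%:P \o map_poly scl3.

Lemma scale4E p : scale4 p = sc1 a1%:P%:P%:P (map_poly scl3 p). Proof. by []. Qed.
Lemma scl3E p : scl3 p = sc1 a2%:P%:P (map_poly scl2 p). Proof. by []. Qed.
Lemma scl2E p : scl2 p = sc1 a3%:P (map_poly scl1 p). Proof. by []. Qed.

Lemma coef_scl1 q l : (scl1 q)`_l = a4 ^+ l * q`_l.
Proof. exact: sc1_coef. Qed.
Lemma coef_scl2 q k l : (scl2 q)`_k`_l = a3 ^+ k * a4 ^+ l * q`_k`_l.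
Proof. by rewrite scl2E sc1_coef coef_map -rmorphXn coefCM coef_scl1 mulrA. Qed.
Lemma coef_scl3 q j k l :
  (scl3 q)`_j`_k`_l = a2 ^+ j * a3 ^+ k * a4 ^+ l * q`_j`_k`_l.
Proof. by rewrite scl3E sc1_coef coef_map -!rmorphXn !coefCM coef_scl2 !mulrA. Qed.
Lemma coef4_scale p i j k l :
  coef4 (scale4 p) i j k l =
  a1 ^+ i * a2 ^+ j * a3 ^+ k * a4 ^+ l * coef4 p i j k l.
Proof.
by rewrite /coef4 scale4E sc1_coef coef_map -!rmorphXn !coefCM coef_scl3 !mulrA.
Qed.

Lemma scl1C c : scl1 c%:P = c%:P. Proof. exact: sc1C. Qed.
Lemma scl2C c : scl2 c%:P%:P = c%:P%:P.
Proof. rewrite scl2E map_polyC sc1C; congr (_%:P); exact: scl1C. Qed.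
Lemma scl3C c : scl3 c%:P%:P%:P = c%:P%:P%:P.
Proof. rewrite scl3E map_polyC sc1C; congr (_%:P); exact: scl2C. Qed.
Lemma scale4C c : scale4 (C4 c) = C4 c.
Proof. rewrite /C4 scale4E map_polyC sc1C; congr (_%:P); exact: scl3C. Qed.
Lemma scl1X : scl1 'X = a4%:P * 'X. Proof. exact: sc1X. Qed.
Lemma scl2X : scl2 'X = a3%:P%:P * 'X. Proof. by rewrite scl2E map_polyX sc1X. Qed.
Lemma scl3X : scl3 'X = a2%:P%:P%:P * 'X. Proof. by rewrite scl3E map_polyX sc1X. Qed.
Lemma scl2X' : scl2 'X%:P = (a4%:P * 'X)%:P.
Proof. rewrite scl2E map_polyC sc1C; congr (_%:P); exact: scl1X. Qed.
Lemma scl3X' : scl3 'X%:P = (a3%:P%:P * 'X)%:P.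
Proof. rewrite scl3E map_polyC sc1C; congr (_%:P); exact: scl2X. Qed.
Lemma scl3X'' : scl3 'X%:P%:P = (a4%:P * 'X)%:P%:P.
Proof. rewrite scl3E map_polyC sc1C; congr (_%:P); exact: scl2X'. Qed.
Lemma scale4X1 : scale4 X1 = C4 a1 * X1.
Proof. by rewrite /X1 scale4E map_polyX sc1X. Qed.
Lemma scale4X2 : scale4 X2 = C4 a2 * X2.
Proof.
rewrite /X2 /C4 scale4E map_polyC sc1C -rmorphM; congr (_%:P); exact: scl3X.
Qed.
Lemma scale4X3 : scale4 X3 = C4 a3 * X3.
Proof.
rewrite /X3 /C4 scale4E map_polyC sc1C -rmorphM; congr (_%:P).
rewrite -rmorphM; exact: scl3X'.
Qed.
Lemma scale4X4 : scale4 X4 = C4 a4 * X4.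
Proof.
rewrite /X4 /C4 scale4E map_polyC sc1C -rmorphM; congr (_%:P).
rewrite -!rmorphM; exact: scl3X''.
Qed.
End Scale.

Section Hom.
Variable K : numDomainType.
Local Notation P := (mpoly4 K).

Lemma coef4_eq (p q : P) :
  (forall i j k l, coef4 p i j k l = coef4 q i j k l) -> p = q.
Proof.
move=> H; apply/polyP => i; apply/polyP => j; apply/polyP => k; apply/polyP => l.
exact: H.
Qed.

Lemma coef4_C4M c (p : P) i j k l : coef4 (C4 c * p) i j k l = c * coef4 p i j k l.
Proof. by rewrite /coef4 /C4 !coefCM. Qed.

Lemma whomog_scale w1 w2 w3 w4 n (p : P) :
  whomog w1 w2 w3 w4 n p ->
  forall x : K, scale4 (x ^+ w1) (x ^+ w2) (x ^+ w3) (x ^+ w4) p = C4 (x ^+ n) * p.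
Proof.
move=> H x; apply: coef4_eq => i j k l.
rewrite coef4_scale coef4_C4M.
have [->|nz] := eqVneq (coef4 p i j k l) 0; first by rewrite !mulr0.
by rewrite -(H _ _ _ _ nz) -!exprM -!exprD.
Qed.

Lemma scale_whomog w1 w2 w3 w4 n (p : P) :
  (forall x : K, scale4 (x ^+ w1) (x ^+ w2) (x ^+ w3) (x ^+ w4) p = C4 (x ^+ n) * p) ->
  whomog w1 w2 w3 w4 n p.
Proof.
move=> H i j k l nz.
have := congr1 (fun q => coef4 q i j k l) (H 2).
rewrite coef4_scale coef4_C4M -!exprM -!exprD => /(mulIf nz) /eqP.
rewrite -!natrX eqr_nat eqn_exp2l // => /eqP.
by [].
Qed.
End Hom.


Definition ismor (A S : nzRingType) (g : A -> S) :=
  [/\ forall x y, g (x + y) = g x + g y, forall x y, g (x * y) = g x * g y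
    & g 0 = 0].

Section EvF.
Variables (A S : comNzRingType).
Lemma ev_uniq_fun (g : {poly A} -> S) (f : {rmorphism A -> S}) :
  ismor g -> (forall a, g a%:P = f a) -> forall p, g p = ev f (g 'X) p.
Proof.
move=> [gD gM g0] gC p; elim/poly_ind: p => [|p c IH]; first by rewrite g0 rmorph0.
by rewrite gD gM !rmorphD !rmorphM IH evX evC gC.
Qed.
Lemma ismorC (g : {poly A} -> S) : ismor g -> ismor (fun a => g a%:P).
Proof.
move=> [gD gM g0]; split; last by rewrite g0.
  by move=> x y; rewrite polyCD gD.
by move=> x y; rewrite polyCM gM.
Qed.
End EvF.

Section Meq.
Variables (K S : comNzRingType).
Local Notation P := (mpoly4 K).
Lemma S4_uniq_fun (g : P -> S) (C : {rmorphism K -> S}) :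
  ismor g -> (forall c, g (C4 c) = C c) ->
  forall p, g p = S4 C (g X1) (g X2) (g X3) (g X4) p.
Proof.
move=> mg HC p; apply: ev_uniq_fun => // q.
have mg1 := ismorC mg; apply: (ev_uniq_fun mg1) => r.
have mg2 := ismorC mg1; apply: (ev_uniq_fun mg2) => s.
have mg3 := ismorC mg2; apply: (ev_uniq_fun mg3) => c.
exact: HC.
Qed.
Lemma morph_eq (C : {rmorphism K -> S}) (g g' : P -> S) :
  ismor g -> ismor g' ->
  (forall c, g (C4 c) = C c) -> (forall c, g' (C4 c) = C c) ->
  g X1 = g' X1 -> g X2 = g' X2 -> g X3 = g' X3 -> g X4 = g' X4 ->
  forall p, g p = g' p.
Proof.
move=> mg mg' HC HC' H1 H2 H3 H4 p.
rewrite (S4_uniq_fun mg HC) (S4_uniq_fun mg' HC') H1 H2 H3 H4.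
by [].
Qed.
Lemma ismorR (g : {rmorphism P -> S}) : ismor g.
Proof. by split; [exact: rmorphD | exact: rmorphM | exact: rmorph0]. Qed.
End Meq.

Section C.
Variable R : rcfType.
Local Notation P := (mpoly4 R).
Definition C4r : {rmorphism R -> P} := polyC \o polyC \o polyC \o polyC.
Lemma C4rE c : C4r c = C4 c. Proof. by []. Qed.
Lemma subst4S (y1 y2 y3 y4 p : P) : subst4 y1 y2 y3 y4 p = S4 C4r y1 y2 y3 y4 p.
Proof.
rewrite -S4E /subst4 /eval4; apply: eval1_ext => q; apply: eval1_ext => r.
apply: eval1_ext => s; apply: eval1_ext => c; by rewrite C4rE.
Qed.
End C.

Section SB.
Variable R : rcfType.
Local Notation P := (mpoly4 R).
Definition sb (y1 y2 y3 y4 : P) (p : P) : P := S4 (C4r R) y1 y2 y3 y4 p.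
Variables y1 y2 y3 y4 : P.
Local Notation f := (sb y1 y2 y3 y4).
Lemma sbE p : subst4 y1 y2 y3 y4 p = f p. Proof. exact: subst4S. Qed.
Lemma sbD p q : f (p + q) = f p + f q. Proof. exact: rmorphD. Qed.
Lemma sbB p q : f (p - q) = f p - f q. Proof. exact: rmorphB. Qed.
Lemma sbN p : f (- p) = - f p. Proof. exact: rmorphN. Qed.
Lemma sbM p q : f (p * q) = f p * f q. Proof. exact: rmorphM. Qed.
Lemma sbX p n : f (p ^+ n) = f p ^+ n. Proof. exact: rmorphXn. Qed.
Lemma sbn n : f n%:R = n%:R. Proof. exact: rmorph_nat. Qed.
Lemma sbC c : f (C4 c) = C4 c. Proof. by rewrite /sb S4C. Qed.
Lemma sb1 : f (@X1 R) = y1. Proof. exact: S4X1. Qed.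
Lemma sb2 : f (@X2 R) = y2. Proof. exact: S4X2. Qed.
Lemma sb3 : f (@X3 R) = y3. Proof. exact: S4X3. Qed.
Lemma sb4 : f (@X4 R) = y4. Proof. exact: S4X4. Qed.
Lemma sb0 : f 0 = 0. Proof. exact: rmorph0. Qed.
Lemma ismor_sb : ismor f. Proof. split; [exact: sbD | exact: sbM | exact: sb0]. Qed.
End SB.

Section Gen.
Variables (R : rcfType) (S : comNzRingType) (k : {rmorphism R -> S}).
Variables (x1 x2 x3 x4 : S).

Record subm (f : S -> S) (y1 y2 y3 y4 : S) : Prop := MkSub {
  sD : forall a b, f (a + b) = f a + f b;
  sM : forall a b, f (a * b) = f a * f b;
  sC : forall c, f (k c) = k c;
  s1 : f x1 = y1; s2 : f x2 = y2; s3 : f x3 = y3; s4 : f x4 = y4 }.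

Lemma sub_ext (f g : S -> S) y1 y2 y3 y4 :
  f =1 g -> subm g y1 y2 y3 y4 -> subm f y1 y2 y3 y4.
Proof.
move=> e [gD gM gC g1 g2 g3 g4]; split.
- by move=> a b; rewrite !e.
- by move=> a b; rewrite !e.
- by move=> c; rewrite e.
- by rewrite e. - by rewrite e. - by rewrite e. - by rewrite e.
Qed.

Section SubTh.
Variables (f : S -> S) (y1 y2 y3 y4 : S) (H : subm f y1 y2 y3 y4).
Lemma s0 : f 0 = 0.
Proof. by rewrite -(rmorph0 k) (sC H). Qed.
Lemma sN a : f (- a) = - f a.
Proof. by apply/eqP; rewrite -subr_eq0 opprK -(sD H) addNr s0. Qed.
Lemma sB a b : f (a - b) = f a - f b.
Proof. by rewrite (sD H) sN. Qed.
Lemma sX a n : f (a ^+ n) = f a ^+ n.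
Proof.
elim: n => [|n IH]; first by rewrite !expr0 -(rmorph1 k) (sC H).
by rewrite !exprS (sM H) IH.
Qed.
End SubTh.

Variables (F : fieldType) (j : {rmorphism S -> F}) (jinj : injective j).

Lemma jk_neq0 c : c != 0 -> j (k c) != 0.
Proof.
move=> nz; apply/eqP => E.
have := congr1 (fun z => z * j (k c^-1)) E.
rewrite mul0r -!rmorphM mulfV //.
by rewrite !rmorph1 => /eqP; rewrite oner_eq0.
Qed.
Lemma nat_neq0 n : (n.+1%:R : F) != 0.
Proof. by rewrite -(rmorph_nat j) -(rmorph_nat k) jk_neq0 // pnatr_eq0. Qed.
Lemma s_neq0 : Num.sqrt (3 : R) != 0.
Proof. by rewrite sqrtr_eq0 -ltNge ltr0n. Qed.

Local Notation s := (Num.sqrt (3 : R)).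
Definition Tv := (x1, k (- 2^-1) * x2 - k (s / 2) * x3, k (s / 2) * x2 - k (2^-1) * x3, x4).
Definition Pv := (x1, k (8 * s) * x4, x1 ^+ 2 - k 4 * x2,
    x3 - k (6^-1) * x1 * x2 + k (24^-1) * x1 ^+ 3).
Definition Qv := (x1, k (4^-1) * (x1 ^+ 2 - x3), x4 - k (24^-1) * x1 * x3,
    k ((8 * s)^-1) * x2).
Definition Iv := (x1 ^+ 2 + x2 ^+ 2 + x3 ^+ 2 + x4 ^+ 2,
    x1 ^+ 2 * x2 ^+ 2 + x1 ^+ 2 * x3 ^+ 2 + x1 ^+ 2 * x4 ^+ 2 + x2 ^+ 2 * x3 ^+ 2
      + x2 ^+ 2 * x4 ^+ 2 + x3 ^+ 2 * x4 ^+ 2,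
    x1 ^+ 2 * x2 ^+ 2 * x3 ^+ 2 + x1 ^+ 2 * x2 ^+ 2 * x4 ^+ 2 + x1 ^+ 2 * x3 ^+ 2 * x4 ^+ 2
      + x2 ^+ 2 * x3 ^+ 2 * x4 ^+ 2,
    x1 * x2 * x3 * x4).
Definition Lv := (k (2^-1) * (x1 + x2 + x3 + x4), k (2^-1) * (x1 + x2 - x3 - x4),
    k (2^-1) * (x1 - x2 + x3 - x4), k (2^-1) * (- x1 + x2 + x3 - x4)).

Definition subv f (v : S * S * S * S) := let: (a, b, c, d) := v in subm f a b c d.

Ltac ev H := rewrite ?(sD H, sB H, sN H, sM H, sX H, sC H, s1 H, s2 H, s3 H, s4 H).
Ltac fin := apply: jinj; field; try done; try (repeat (apply/andP; split); apply: nat_neq0).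

Variables (T Ps Q Io L : S -> S).
Hypotheses (hT : subv T Tv) (hP : subv Ps Pv) (hQ : subv Q Qv) (hI : subv Io Iv)
  (hL : subv L Lv).

Lemma gint1 : Io (Ps (T x1)) = L (Io (Ps x1)).
Proof. ev hT; ev hP; ev hI; ev hL. fin. Qed.
Lemma key3 (y : S) : k (s / 2) * (k (8 * s) * y) = k 12 * y.
Proof.
rewrite mulrA -rmorphM; congr (k _ * _).
have h : s * s = 3 by rewrite -expr2 sqr_sqrtr // ler0n.
have -> : s / 2 * (8 * s) = 4 * (s * s) by field.
by rewrite h -natrM.
Qed.
Lemma gint2 : Io (Ps (T x2)) = L (Io (Ps x2)).
Proof. ev hT; ev hP; ev hI; ev hL. fin. Qed.
Lemma gint3 : Io (Ps (T x3)) = L (Io (Ps x3)).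
Proof. ev hT; ev hP; ev hI; ev hL. rewrite key3. fin. Qed.
Lemma gint4 : Io (Ps (T x4)) = L (Io (Ps x4)).
Proof. ev hT; ev hP; ev hI; ev hL. fin. Qed.
Lemma gPQ1 : Ps (Q x1) = x1. Proof. ev hQ; ev hP. fin. Qed.
Lemma gPQ2 : Ps (Q x2) = x2. Proof. ev hQ; ev hP. fin. Qed.
Lemma gPQ3 : Ps (Q x3) = x3. Proof. ev hQ; ev hP. fin. Qed.
Lemma gPQ4 : Ps (Q x4) = x4. Proof. ev hQ; ev hP. fin. apply/andP; split; [apply: jk_neq0; exact: s_neq0 | exact: nat_neq0]. Qed.
Lemma gQP1 : Q (Ps x1) = x1. Proof. ev hP; ev hQ. fin. Qed.
Lemma gQP2 : Q (Ps x2) = x2. Proof. ev hP; ev hQ. fin. apply/andP; split; [apply: jk_neq0; exact: s_neq0 | exact: nat_neq0]. Qed.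
Lemma gQP3 : Q (Ps x3) = x3. Proof. ev hP; ev hQ. fin. Qed.
Lemma gQP4 : Q (Ps x4) = x4. Proof. ev hP; ev hQ. fin. Qed.

Variable lam : R.
Definition Sv := (k (lam ^+ 1) * x1, k (lam ^+ 2) * x2, k (lam ^+ 3) * x3, k (lam ^+ 2) * x4).
Definition Sw := (k (lam ^+ 1) * x1, k (lam ^+ 2) * x2, k (lam ^+ 2) * x3, k (lam ^+ 3) * x4).
Variables (Scv Scw : S -> S).
Hypotheses (hv : subv Scv Sv) (hw : subv Scw Sw).
Lemma gsc1 : Scv (Ps x1) = Ps (Scw x1). Proof. ev hP; ev hv; ev hw; ev hP. fin. Qed.
Lemma gsc2 : Scv (Ps x2) = Ps (Scw x2). Proof. ev hP; ev hv; ev hw; ev hP. fin. Qed.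
Lemma gsc3 : Scv (Ps x3) = Ps (Scw x3). Proof. ev hP; ev hv; ev hw; ev hP. fin. Qed.
Lemma gsc4 : Scv (Ps x4) = Ps (Scw x4). Proof. ev hP; ev hv; ev hw; ev hP. fin. Qed.
End Gen.

Lemma ismor_comp (A B D : nzRingType) (f : B -> D) (g : A -> B) :
  ismor f -> ismor g -> ismor (fun x => f (g x)).
Proof.
move=> [fD fM f0] [gD gM g0]; split.
- by move=> x y; rewrite gD fD.
- by move=> x y; rewrite gM fM.
- by rewrite g0 f0.
Qed.

Lemma ismor_id (A : nzRingType) : ismor (fun x : A => x).
Proof. by []. Qed.

Section Fin.
Variable R : rcfType.
Local Notation P := (mpoly4 R).
Local Notation s := (Num.sqrt (3 : R)).
Local Notation x1 := (@X1 R). Local Notation x2 := (@X2 R).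
Local Notation x3 := (@X3 R). Local Notation x4 := (@X4 R).

Definition PsiF (f : P) : P :=
  subst4 x1 (C4 (8 * s) * x4) (x1 ^+ 2 - C4 4 * x2)
    (x3 - C4 (6^-1) * x1 * x2 + C4 (24^-1) * x1 ^+ 3) f.
Definition QF (f : P) : P :=
  subst4 x1 (C4 (4^-1) * (x1 ^+ 2 - x3)) (x4 - C4 (24^-1) * x1 * x3)
    (C4 ((8 * s)^-1) * x2) f.

Definition tf : {rmorphism P -> {fraction P}} := @tofrac _.
Lemma frac_inj : injective tf.
Proof. by move=> p q /eqP; rewrite tofrac_eq => /eqP. Qed.

Lemma sub_subst4 (y1 y2 y3 y4 : P) :
  subm (C4r R) x1 x2 x3 x4 (subst4 y1 y2 y3 y4) y1 y2 y3 y4.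
Proof.
split.
- by move=> a b; rewrite !sbE sbD.
- by move=> a b; rewrite !sbE sbM.
- by move=> c; rewrite C4rE sbE sbC.
- by rewrite sbE sb1.
- by rewrite sbE sb2.
- by rewrite sbE sb3.
- by rewrite sbE sb4.
Qed.

Lemma sub_scale (a1 a2 a3 a4 : R) :
  subm (C4r R) x1 x2 x3 x4 (scale4 a1 a2 a3 a4)
    (C4r R a1 * x1) (C4r R a2 * x2) (C4r R a3 * x3) (C4r R a4 * x4).
Proof.
split.
- by move=> a b; exact: rmorphD.
- by move=> a b; exact: rmorphM.
- by move=> c; rewrite C4rE scale4C.
- by rewrite C4rE scale4X1.
- by rewrite C4rE scale4X2.
- by rewrite C4rE scale4X3.
- by rewrite C4rE scale4X4.
Qed.

Lemma ismor_subst4 (y1 y2 y3 y4 : P) : ismor (subst4 y1 y2 y3 y4).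
Proof.
split; first by move=> x y; rewrite !sbE sbD.
  by move=> x y; rewrite !sbE sbM.
by rewrite sbE sb0.
Qed.

Lemma ismor_sc (a1 a2 a3 a4 : R) : ismor (scale4 a1 a2 a3 a4).
Proof. exact: ismorR. Qed.

Lemma subst4C (y1 y2 y3 y4 : P) c : subst4 y1 y2 y3 y4 (C4 c) = C4 c.
Proof. by rewrite sbE sbC. Qed.


Lemma hT : subv (C4r R) x1 x2 x3 x4 (@triality_abcd R) (Tv (C4r R) x1 x2 x3 x4).
Proof. exact: sub_subst4. Qed.
Lemma hP : subv (C4r R) x1 x2 x3 x4 PsiF (Pv (C4r R) x1 x2 x3 x4).
Proof. exact: sub_subst4. Qed.
Lemma hQ : subv (C4r R) x1 x2 x3 x4 QF (Qv (C4r R) x1 x2 x3 x4).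
Proof. exact: sub_subst4. Qed.
Lemma hI : subv (C4r R) x1 x2 x3 x4 (@iotaBSO8 R) (Iv x1 x2 x3 x4).
Proof.
have E : @iotaBSO8 R =1 subst4 (x1 ^+ 2 + x2 ^+ 2 + x3 ^+ 2 + x4 ^+ 2)
    (x1 ^+ 2 * x2 ^+ 2 + x1 ^+ 2 * x3 ^+ 2 + x1 ^+ 2 * x4 ^+ 2 + x2 ^+ 2 * x3 ^+ 2
      + x2 ^+ 2 * x4 ^+ 2 + x3 ^+ 2 * x4 ^+ 2)
    (x1 ^+ 2 * x2 ^+ 2 * x3 ^+ 2 + x1 ^+ 2 * x2 ^+ 2 * x4 ^+ 2 + x1 ^+ 2 * x3 ^+ 2 * x4 ^+ 2
      + x2 ^+ 2 * x3 ^+ 2 * x4 ^+ 2)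
    (x1 * x2 * x3 * x4).
  by move=> f; rewrite /iotaBSO8 /Lsq1 /Lsq2 /Lsq3 /Lsq4.
apply: (sub_ext E); exact: sub_subst4.
Qed.
Lemma hL : subv (C4r R) x1 x2 x3 x4 (@triality_L R) (Lv (C4r R) x1 x2 x3 x4).
Proof. exact: sub_subst4. Qed.
Lemma hS (a1 a2 a3 a4 : R) : subm (C4r R) x1 x2 x3 x4 (scale4 a1 a2 a3 a4)
    (C4r R a1 * x1) (C4r R a2 * x2) (C4r R a3 * x3) (C4r R a4 * x4).
Proof. exact: sub_scale. Qed.

Ltac closeg := first [exact: frac_inj | exact: hT | exact: hP | exact: hQ | exact: hI | exact: hL | exact: hS].

Lemma int_all f :
  iotaBSO8 (PsiF (triality_abcd f)) = triality_L (iotaBSO8 (PsiF f)).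
Proof.
apply: (@morph_eq _ _ (C4r R) (fun f => iotaBSO8 (PsiF (triality_abcd f)))
  (fun f => triality_L (iotaBSO8 (PsiF f)))).
- exact: (ismor_comp (ismor_subst4 _ _ _ _)
           (ismor_comp (ismor_subst4 _ _ _ _) (ismor_subst4 _ _ _ _))).
- exact: (ismor_comp (ismor_subst4 _ _ _ _) (ismor_comp (ismor_subst4 _ _ _ _)
           (ismor_subst4 _ _ _ _))).
- by move=> c; rewrite /iotaBSO8 /PsiF /triality_abcd !subst4C C4rE.
- by move=> c; rewrite /iotaBSO8 /PsiF /triality_L !subst4C C4rE.
- cbv beta; apply: (@gint1 R P (C4r R) x1 x2 x3 x4 _ tf frac_inj (@triality_abcd R) PsiF (@iotaBSO8 R) (@triality_L R)); [exact: hT | exact: hP | exact: hI | exact: hL].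
- cbv beta; apply: (@gint2 R P (C4r R) x1 x2 x3 x4 _ tf frac_inj (@triality_abcd R) PsiF (@iotaBSO8 R) (@triality_L R)); [exact: hT | exact: hP | exact: hI | exact: hL].
- cbv beta; apply: (@gint3 R P (C4r R) x1 x2 x3 x4 _ tf frac_inj (@triality_abcd R) PsiF (@iotaBSO8 R) (@triality_L R)); [exact: hT | exact: hP | exact: hI | exact: hL].
- cbv beta; apply: (@gint4 R P (C4r R) x1 x2 x3 x4 _ tf frac_inj (@triality_abcd R) PsiF (@iotaBSO8 R) (@triality_L R)); [exact: hT | exact: hP | exact: hI | exact: hL].
Qed.

Lemma PsiF_cancel : cancel PsiF QF.
Proof.
move=> p.
apply: (@morph_eq _ _ (C4r R) (fun p => QF (PsiF p)) (fun p => p)).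
- exact: (ismor_comp (ismor_subst4 _ _ _ _) (ismor_subst4 _ _ _ _)).
- exact: ismor_id.
- by move=> c; rewrite /QF /PsiF !subst4C C4rE.
- by move=> c; rewrite C4rE.
- cbv beta; apply: (@gQP1 R P (C4r R) x1 x2 x3 x4 _ tf frac_inj PsiF QF); [exact: hP | exact: hQ].
- cbv beta; apply: (@gQP2 R P (C4r R) x1 x2 x3 x4 _ tf frac_inj PsiF QF); [exact: hP | exact: hQ].
- cbv beta; apply: (@gQP3 R P (C4r R) x1 x2 x3 x4 _ tf frac_inj PsiF QF); [exact: hP | exact: hQ].
- cbv beta; apply: (@gQP4 R P (C4r R) x1 x2 x3 x4 _ tf frac_inj PsiF QF); [exact: hP | exact: hQ].
Qed.

Lemma QF_cancel : cancel QF PsiF.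
Proof.
move=> p.
apply: (@morph_eq _ _ (C4r R) (fun p => PsiF (QF p)) (fun p => p)).
- exact: (ismor_comp (ismor_subst4 _ _ _ _) (ismor_subst4 _ _ _ _)).
- exact: ismor_id.
- by move=> c; rewrite /QF /PsiF !subst4C C4rE.
- by move=> c; rewrite C4rE.
- cbv beta; apply: (@gPQ1 R P (C4r R) x1 x2 x3 x4 _ tf frac_inj PsiF QF); [exact: hP | exact: hQ].
- cbv beta; apply: (@gPQ2 R P (C4r R) x1 x2 x3 x4 _ tf frac_inj PsiF QF); [exact: hP | exact: hQ].
- cbv beta; apply: (@gPQ3 R P (C4r R) x1 x2 x3 x4 _ tf frac_inj PsiF QF); [exact: hP | exact: hQ].
- cbv beta; apply: (@gPQ4 R P (C4r R) x1 x2 x3 x4 _ tf frac_inj PsiF QF); [exact: hP | exact: hQ].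
Qed.

Lemma PsiF_scale (x : R) p :
  scale4 (x ^+ 1) (x ^+ 2) (x ^+ 3) (x ^+ 2) (PsiF p) =
  PsiF (scale4 (x ^+ 1) (x ^+ 2) (x ^+ 2) (x ^+ 3) p).
Proof.
apply: (@morph_eq _ _ (C4r R)
  (fun p => scale4 (x ^+ 1) (x ^+ 2) (x ^+ 3) (x ^+ 2) (PsiF p))
  (fun p => PsiF (scale4 (x ^+ 1) (x ^+ 2) (x ^+ 2) (x ^+ 3) p))).
- exact: (ismor_comp (ismor_sc _ _ _ _) (ismor_subst4 _ _ _ _)).
- exact: (ismor_comp (ismor_subst4 _ _ _ _) (ismor_sc _ _ _ _)).
- by move=> c; rewrite /PsiF subst4C scale4C C4rE.
- by move=> c; rewrite /PsiF scale4C subst4C C4rE.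
- cbv beta; apply: (@gsc1 R P (C4r R) x1 x2 x3 x4 _ tf frac_inj PsiF _ x (scale4 (x ^+ 1) (x ^+ 2) (x ^+ 3) (x ^+ 2)) (scale4 (x ^+ 1) (x ^+ 2) (x ^+ 2) (x ^+ 3))); [exact: hP | exact: hS | exact: hS].
- cbv beta; apply: (@gsc2 R P (C4r R) x1 x2 x3 x4 _ tf frac_inj PsiF _ x (scale4 (x ^+ 1) (x ^+ 2) (x ^+ 3) (x ^+ 2)) (scale4 (x ^+ 1) (x ^+ 2) (x ^+ 2) (x ^+ 3))); [exact: hP | exact: hS | exact: hS].
- cbv beta; apply: (@gsc3 R P (C4r R) x1 x2 x3 x4 _ tf frac_inj PsiF _ x (scale4 (x ^+ 1) (x ^+ 2) (x ^+ 3) (x ^+ 2)) (scale4 (x ^+ 1) (x ^+ 2) (x ^+ 2) (x ^+ 3))); [exact: hP | exact: hS | exact: hS].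
- cbv beta; apply: (@gsc4 R P (C4r R) x1 x2 x3 x4 _ tf frac_inj PsiF _ x (scale4 (x ^+ 1) (x ^+ 2) (x ^+ 3) (x ^+ 2)) (scale4 (x ^+ 1) (x ^+ 2) (x ^+ 2) (x ^+ 3))); [exact: hP | exact: hS | exact: hS].
Qed.

End Fin.

Theorem mainTheorem8 (R : rcfType) :
  exists Psi : mpoly4 R -> mpoly4 R,
    [/\ alg_hom Psi,
        bijective Psi,
        graded 1 2 2 3 1 2 3 2 Psi &
        forall f : mpoly4 R,
          iotaBSO8 (Psi (triality_abcd f)) = triality_L (iotaBSO8 (Psi f))].
Proof.
exists (@PsiF R); split.
- split.
  + by move=> x y; rewrite /PsiF !sbE sbD.
  + by move=> x y; rewrite /PsiF !sbE sbM.
  + by move=> c; rewrite /PsiF sbE sbC.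
- exact: (Bijective (@PsiF_cancel R) (@QF_cancel R)).
- move=> n p hp; apply: scale_whomog => x.
  rewrite PsiF_scale (whomog_scale hp x).
  by rewrite /PsiF !sbE sbM sbC.
- exact: int_all.
Qed.
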